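(* Let $h,h_*$ be functions of $x$, let $\epsilon\ge0$, and let $f_h$ be a test function with $\|f_h-T(h_*-h)\|_2\le\epsilon$ and $\|f_h\|_2>0$. Let $\Psi(h,f)=\mathbb E[(y-h(x))f(z)]$. Then $$\frac1{\|f_h\|_2}\big(\Psi(h,f_h)-\Psi(h_*,f_h)\big)\ge\|T(h-h_* )\|_2-2\epsilon.$$
   Context: $(y,x,z)$ is a random vector; $(Th)(z)=\mathbb E[h(x)\mid z]$ and $\|\cdot\|_2$ is the population $L^2$ norm. *)

(* Defs.v *)
From HB Require Import structures.
From mathcomp Require Import all_boot all_order all_algebra.
From mathcomp Require Import all_classical all_reals all_analysis.
Import Order.TTheory GRing.Theory Num.Theory.
Local Open Scope classical_set_scope.
Local Open Scope ring_scope.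
Local Open Scope ereal_scope.

Definition pnorm2 {d dU} {Omega : measurableType d} {U : measurableType dU}
  {R : realType} (P : probability Omega R) (u : Omega -> U) (phi : U -> R)
  : \bar R :=
  Lnorm P 2%:E (fun w => (phi (u w))%:E).

(* g : Z -> R is a version of the conditional expectation E[v | z]
   (Kolmogorov's definition): g is measurable, g(z) is integrable, and
   E[v 1_{z in B}] = E[g(z) 1_{z in B}] for every measurable B. *)
Definition is_cond_exp {d dZ} {Omega : measurableType d} {Z : measurableType dZ}
  {R : realType} (P : probability Omega R) (z : Omega -> Z) (v : Omega -> R)
  (g : Z -> R) : Prop :=
  [/\ measurable_fun setT g,
      P.-integrable setT (fun w => (g (z w))%:E) &
      forall B : set Z, measurable B ->
        \int[P]_(w in z @^-1` B) (v w)%:E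
        = \int[P]_(w in z @^-1` B) (g (z w))%:E].

Definition Psi {d dX dZ} {Omega : measurableType d} {X : measurableType dX}
  {Z : measurableType dZ} {R : realType} (P : probability Omega R)
  (y : Omega -> R) (x : Omega -> X) (z : Omega -> Z) (h : X -> R) (f : Z -> R)
  : \bar R :=
  \int[P]_w ((y w - h (x w)) * f (z w))%:E.

(* Main.v *)
Require Import Defs.
From HB Require Import structures.
From mathcomp Require Import all_boot all_order all_algebra.
From mathcomp Require Import all_classical all_reals all_analysis.
From mathcomp Require Import measurable_realfun.
From mathcomp Require Import ring lra.
Import Order.TTheory GRing.Theory Num.Theory.
Local Open Scope classical_set_scope.
Local Open Scope ring_scope.
Local Open Scope ereal_scope.
Section L2.
Set Implicit Arguments.
Unset Strict Implicit.
Context d (T : measurableType d) (R : realType) (P : probability T R).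
Local Notation N2 f := (Lnorm P 2%:E (EFin \o f)).

Lemma half_conj : (2^-1 + 2^-1 = 1 :> R)%R.
Proof. by rewrite -div1r -splitr. Qed.

Lemma L2_int_prod (a b : T -> R) : measurable_fun setT a -> measurable_fun setT b ->
  N2 a < +oo -> N2 b < +oo -> P.-integrable setT (EFin \o (a \* b)%R).
Proof.
move=> ma mb fa fb; apply/integrableP; split.
  exact/measurable_EFinP/measurable_funM.
rewrite -Lnorm1.
apply: le_lt_trans (hoelder P ma mb _ _ half_conj) _ => //.
apply: lte_mul_pinfty => //.
- exact: Lnorm_ge0.
- by rewrite ge0_fin_numE // Lnorm_ge0.
Qed.

Lemma L2_add (a b : T -> R) : measurable_fun setT a -> measurable_fun setT b ->
  N2 a < +oo -> N2 b < +oo -> N2 (a \+ b)%R < +oo.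
Proof.
move=> ma mb fa fb.
apply: le_lt_trans (minkowski_EFin P ma mb _) _; first by rewrite ler1n.
exact: lte_add_pinfty.
Qed.

Lemma L2_opp (a : T -> R) : N2 (fun w => - a w)%R = N2 a.
Proof.
transitivity (Lnorm P 2%:E (\- (EFin \o a))); last exact: oppe_Lnorm.
by apply: eq_Lnorm => w /=; rewrite EFinN.
Qed.

Lemma L2_cst1 : N2 (cst 1%R) < +oo.
Proof.
rewrite (_ : EFin \o cst 1%R = cst 1) ?Lnorm_cst1 ?probability_setT ?poweR1r//.
set m := (X in X `^ _ < _).
have -> : m = 1 by exact: probability_setT.
by rewrite poweR1r ltey.
Qed.

Lemma L2_int (a : T -> R) : measurable_fun setT a -> N2 a < +oo ->
  P.-integrable setT (EFin \o a).
Proof.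
move=> ma fa; have := L2_int_prod ma (measurable_cst (1%R : R)) fa L2_cst1.
apply: eq_integrable => // w _ /=; by rewrite mulr1.
Qed.

End L2.

Section tower.
Set Implicit Arguments.
Unset Strict Implicit.
Context d dZ (Omega : measurableType d) (Z : measurableType dZ) (R : realType)
  (P : probability Omega R) (z : Omega -> Z) (mz : measurable_fun setT z).

Import HBNNSimple.

Lemma mpre (A : set Z) : measurable A -> measurable (z @^-1` A).
Proof. by move=> mA; rewrite -(setTI (z @^-1` A)); exact: mz. Qed.

Lemma tower_ind (u : Omega -> R) (A : set Z) : measurable A ->
  \int[P]_w (u w * \1_A (z w))%:E = \int[P]_(w in z @^-1` A) (u w)%:E.
Proof.
move=> mA; rewrite [RHS]integral_mkcond; apply: eq_integral => w _.
rewrite patchE indicE; case: (boolP (z w \in A)) => zA.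
- by rewrite mulr1 ifT //; apply/mem_set; exact: (set_mem zA).
- rewrite mulr0 ifF //; apply/negbTE; apply: contra zA => /set_mem zA.
  exact/mem_set.
Qed.

Lemma int_ind (u : Omega -> R) (A : set Z) : measurable_fun setT u ->
  P.-integrable setT (EFin \o u) -> measurable A ->
  P.-integrable setT (fun w => (u w * \1_A (z w))%:E).
Proof.
move=> mu iu mA; move: iu; apply: le_integrable => //.
- apply/measurable_EFinP; apply: measurable_funM => //.
  by apply: measurableT_comp mz; exact: measurable_indic.
- move=> w _ /=; rewrite lee_fin normrM ler_piMr // indicE.
  by case: (z w \in A); rewrite ?normr1 ?normr0.
Qed.

Lemma tower_sfun_expand (u : Omega -> R) (s : {nnsfun Z >-> R}) :
  measurable_fun setT u -> P.-integrable setT (EFin \o u) ->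
  let S := fset_set (range (fun x => s x)) in
  \int[P]_w (u w * s (z w))%:E =
  \sum_(i < size (finmap.enum_fset S))
     (((finmap.enum_fset S)`_i)%:E * \int[P]_(w in z @^-1` (s @^-1` [set (finmap.enum_fset S)`_i])) (u w)%:E).
Proof.
move=> mu iu S.
transitivity (\int[P]_w \sum_(i < size (finmap.enum_fset S))
   (((finmap.enum_fset S)`_i)%:E * (u w * \1_(s @^-1` [set (finmap.enum_fset S)`_i]) (z w))%:E)).
  apply: eq_integral => w _; rewrite (fimfunEord s (z w)) mulr_sumr sumEFin.
  congr EFin; apply: eq_bigr => i _; by rewrite mulrCA.
rewrite integral_sum //; last first.
  by move=> i; apply: integrableZl => //; apply: int_ind.
apply: eq_bigr => i _; rewrite integralZl //; last first.
  apply: int_ind => //; by apply: measurable_funPTI.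
by rewrite tower_ind //; by apply: measurable_funPTI.
Qed.

Variables (u1 u2 : Omega -> R).
Hypotheses (mu1 : measurable_fun setT u1) (mu2 : measurable_fun setT u2).
Hypotheses (i1 : P.-integrable setT (EFin \o u1))
  (i2 : P.-integrable setT (EFin \o u2)).
Hypothesis hB : forall B, measurable B ->
  \int[P]_(w in z @^-1` B) (u1 w)%:E = \int[P]_(w in z @^-1` B) (u2 w)%:E.

Lemma tower_sfun (s : {nnsfun Z >-> R}) :
  \int[P]_w (u1 w * s (z w))%:E = \int[P]_w (u2 w * s (z w))%:E.
Proof.
rewrite (tower_sfun_expand s mu1 i1) (tower_sfun_expand s mu2 i2).
by apply: eq_bigr => i _; rewrite hB.
Qed.


Lemma tower_cvg (u : Omega -> R) (f : Z -> R) (mu : measurable_fun setT u)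
  (mf : measurable_fun setT f) (f0 : forall t, (0 <= f t)%R)
  (j : P.-integrable setT (fun w => (u w * f (z w))%:E)) :
  let mfE := (measurable_EFinP setT f).2 mf in
  (fun n => \int[P]_w (u w * nnsfun_approx measurableT mfE n (z w))%:E)
    @ \oo --> \int[P]_w (u w * f (z w))%:E.
Proof.
move=> mfE.
set s := nnsfun_approx measurableT mfE.
have f0' : forall t, [set: Z] t -> (0%R <= (EFin \o f) t)%E.
  by move=> t _; rewrite lee_fin.
have sf n t : (s n t <= f t)%R.
  have := le_approx n f0' (I : [set: Z] t).
  by rewrite -(nnsfun_approxE measurableT mfE) lee_fin.
have cs t : EFin \o (s ^~ t) @ \oo --> (f t)%:E.
  exact: (cvg_nnsfun_approx measurableT mfE f0' (I : [set: Z] t)).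
have mf_ : forall n, measurable_fun setT (fun w => (u w * s n (z w))%:E).
  move=> n; apply: measurableT_comp => //; apply: measurable_funM => //.
  apply: measurableT_comp mz; exact: measurable_funPT.
have mf' : measurable_fun setT (fun w => (u w * f (z w))%:E).
  apply: measurableT_comp => //; apply: measurable_funM => //.
  exact: measurableT_comp mz.
have f_f : {ae P, forall w, setT w ->
    (fun n => (u w * s n (z w))%:E) @ \oo --> (u w * f (z w))%:E}.
  apply: aeW => w _ /=.
  rewrite EFinM; under eq_fun do rewrite EFinM.
  by apply: cvgeZl => //; exact: cs.
have ig : P.-integrable setT (fun w => `|(u w * f (z w))%:E|).
  exact: integrable_abse.
have f_g : {ae P, forall w n, setT w ->
    `|(u w * s n (z w))%:E| <= `|(u w * f (z w))%:E|}.
  apply: aeW => w n _ /=.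
  rewrite lee_fin !normrM ler_wpM2l // !ger0_norm //; exact: sf.
by case: (dominated_convergence measurableT mf_ mf' f_f ig f_g).
Qed.

Lemma tower_ge0 (f : Z -> R) (mf : measurable_fun setT f)
  (f0 : forall t, (0 <= f t)%R)
  (j1 : P.-integrable setT (fun w => (u1 w * f (z w))%:E))
  (j2 : P.-integrable setT (fun w => (u2 w * f (z w))%:E)) :
  \int[P]_w (u1 w * f (z w))%:E = \int[P]_w (u2 w * f (z w))%:E.
Proof.
have H1 := tower_cvg mu1 mf f0 j1.
have H2 := tower_cvg mu2 mf f0 j2.
cbv zeta in H1, H2.
move: H1; under eq_fun do rewrite tower_sfun.
move=> H1; exact: (cvg_unique (@ereal_hausdorff R) H1 H2).
Qed.

Lemma tower_gen (f : Z -> R) (mf : measurable_fun setT f)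
  (j1 : P.-integrable setT (fun w => (u1 w * f (z w))%:E))
  (j2 : P.-integrable setT (fun w => (u2 w * f (z w))%:E)) :
  \int[P]_w (u1 w * f (z w))%:E = \int[P]_w (u2 w * f (z w))%:E.
Proof.
have fE t : f t = (f^\+ t - f^\- t)%R.
  by have := congr1 (fun g => g t) (funrposBneg f).
have fpn t : (f^\+ t <= `|f t| /\ f^\- t <= `|f t|)%R.
  have := congr1 (fun g => g t) (funrposDneg f) => /= <-.
  by split; [rewrite lerDl | rewrite lerDr]; exact: funrneg_ge0 || exact: funrpos_ge0.
have mp := measurable_funrpos mf.
have mn := measurable_funrneg mf.
have jp (u : Omega -> R) (mu : measurable_fun setT u)
    (j : P.-integrable setT (fun w => (u w * f (z w))%:E)) :
    P.-integrable setT (fun w => (u w * f^\+ (z w))%:E).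
  move: j; apply: le_integrable => //.
  - apply: measurableT_comp => //; apply: measurable_funM => //.
    exact: measurableT_comp mz.
  - move=> w _ /=; rewrite lee_fin !normrM ler_wpM2l //.
    by rewrite ger0_norm ?funrpos_ge0 //; case: (fpn (z w)).
have jn (u : Omega -> R) (mu : measurable_fun setT u)
    (j : P.-integrable setT (fun w => (u w * f (z w))%:E)) :
    P.-integrable setT (fun w => (u w * f^\- (z w))%:E).
  move: j; apply: le_integrable => //.
  - apply: measurableT_comp => //; apply: measurable_funM => //.
    exact: measurableT_comp mz.
  - move=> w _ /=; rewrite lee_fin !normrM ler_wpM2l //.
    by rewrite ger0_norm ?funrneg_ge0 //; case: (fpn (z w)).
have E (u : Omega -> R) (mu : measurable_fun setT u)
    (j : P.-integrable setT (fun w => (u w * f (z w))%:E)) :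
    \int[P]_w (u w * f (z w))%:E =
    \int[P]_w (u w * f^\+ (z w))%:E - \int[P]_w (u w * f^\- (z w))%:E.
  rewrite -integralB_EFin //; [|exact: jp|exact: jn].
  by apply: eq_integral => w _; rewrite -EFinB -mulrBr -fE.
rewrite (E u1 mu1 j1) (E u2 mu2 j2).
rewrite (tower_ge0 mp (funrpos_ge0 f) (jp u1 mu1 j1) (jp u2 mu2 j2)).
by rewrite (tower_ge0 mn (funrneg_ge0 f) (jn u1 mu1 j1) (jn u2 mu2 j2)).
Qed.

End tower.

Section uniq.
Set Implicit Arguments.
Unset Strict Implicit.
Context d dZ (Omega : measurableType d) (Z : measurableType dZ) (R : realType)
  (P : probability Omega R) (z : Omega -> Z) (mz : measurable_fun setT z).

Lemma cond_unique (v : Omega -> R) (g1 g2 : Z -> R)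
  (mg1 : measurable_fun setT g1) (mg2 : measurable_fun setT g2)
  (iv : P.-integrable setT (EFin \o v))
  (ig1 : P.-integrable setT (fun w => (g1 (z w))%:E))
  (ig2 : P.-integrable setT (fun w => (g2 (z w))%:E))
  (H1 : forall B, measurable B ->
     \int[P]_(w in z @^-1` B) (v w)%:E = \int[P]_(w in z @^-1` B) (g1 (z w))%:E)
  (H2 : forall B, measurable B ->
     \int[P]_(w in z @^-1` B) (- v w)%:E = \int[P]_(w in z @^-1` B) (g2 (z w))%:E) :
  Lnorm P 2%:E (fun w => (g2 (z w))%:E) = Lnorm P 2%:E (fun w => (g1 (z w))%:E).
Proof.
pose mu := @measure_function_pushforward__canonical__measure_function_Measure
  _ _ _ _ _ P z mz.
have intS (g : Z -> R) (E : set Z) : measurable E ->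
    P.-integrable setT (fun w => (g (z w))%:E) ->
    P.-integrable (z @^-1` E) ((EFin \o g) \o z).
  move=> mE ig; apply: integrableS ig => //; exact: mpre.
have ae : ae_eq mu setT (EFin \o g1) (EFin \o (fun t => - g2 t)%R).
  apply: integral_ae_eq => //.
  - by apply: integrable_pushforward => //; try exact/measurable_EFinP.
  - by apply/measurable_EFinP; apply: measurableT_comp.
  - move=> E _ mE.
    rewrite integral_pushforward //; try exact/measurable_EFinP; try exact: intS.
    rewrite integral_pushforward //;
      try (by apply/measurable_EFinP; apply: measurableT_comp);
      try (apply: intS => //; apply: eq_integrable (integrableN ig2) => // w _ /=;
           by rewrite ?EFinN).
    have iE (g : Omega -> R) : P.-integrable setT (fun w => (g w)%:E) ->
        P.-integrable (z @^-1` E) (fun w => (g w)%:E).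
      by move=> ig; apply: integrableS ig => //; exact: mpre.
    have e1 : \int[P]_(w in z @^-1` E) (- g2 (z w))%:E =
              - \int[P]_(w in z @^-1` E) (g2 (z w))%:E.
      under eq_integral do rewrite EFinN.
      rewrite integralN //; apply: integrable_add_def; first exact: mpre.
      exact: (iE (fun w => g2 (z w))).
    have e2 : \int[P]_(w in z @^-1` E) (g2 (z w))%:E =
              - \int[P]_(w in z @^-1` E) (v w)%:E.
      rewrite -H2 //; under eq_integral do rewrite EFinN.
      rewrite integralN //; apply: integrable_add_def; first exact: mpre.
      exact: (iE v).
    have e3 := H1 E mE.
    rewrite e2 oppeK in e1.
    exact: (etrans (esym e3) (esym e1)).
have mp (g : Z -> R) : measurable_fun setT g ->
    measurable_fun setT (fun t => `|(g t)%:E| `^ 2).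
  move=> mg; apply: (measurableT_comp (measurable_poweR _)).
  apply: measurableT_comp => //; exact/measurable_EFinP.
have pf (g : Z -> R) : measurable_fun setT g ->
    \int[P]_w (`|(g (z w))%:E| `^ 2) = \int[mu]_t (`|(g t)%:E| `^ 2).
  move=> mg; symmetry.
  apply: (@ge0_integral_pushforward _ _ _ _ _ z mz P setT
    (fun t => `|(g t)%:E| `^ 2) measurableT (mp g mg)).
  by move=> t _; exact: poweR_ge0.
rewrite unlock /=; congr (_ `^ _).
rewrite (pf _ mg2) (pf _ mg1).
apply: ae_eq_integral => //; [exact: mp|exact: mp|].
apply: filterS ae => t /= h _.
by case: (h I) => ->; rewrite normrN.
Qed.

End uniq.

Theorem lemma4 (R : realType) (d dX dZ : measure_display)
  (Omega : measurableType d) (X : measurableType dX) (Z : measurableType dZ)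
  (P : probability Omega R)
  (y : Omega -> R) (x : Omega -> X) (z : Omega -> Z)
  (h hs : X -> R) (fh : Z -> R) (eps : R)
  (Tdiff Tdiff' : Z -> R)
  (my : measurable_fun setT y) (mx : measurable_fun setT x)
  (mz : measurable_fun setT z)
  (mh : measurable_fun setT h) (mhs : measurable_fun setT hs)
  (mfh : measurable_fun setT fh)
  (y2 : Lnorm P 2%:E (fun w => (y w)%:E) < +oo)
  (h2 : pnorm2 P x h < +oo) (hs2 : pnorm2 P x hs < +oo)
  (fh2 : pnorm2 P z fh < +oo)
  (HT : is_cond_exp P z (fun w => hs (x w) - h (x w))%R Tdiff)
  (HT' : is_cond_exp P z (fun w => h (x w) - hs (x w))%R Tdiff')
  (heps : (0 <= eps)%R)
  (hclose : pnorm2 P z (fun t => fh t - Tdiff t)%R <= eps%:E)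
  (hpos : 0 < pnorm2 P z fh) :
  (Psi P y x z h fh - Psi P y x z hs fh) * (pnorm2 P z fh)^-1
    >= pnorm2 P z Tdiff' - (2 * eps)%:E.
Proof.
case: HT => mT iT hT; case: HT' => mT' iT' hT'.
pose F := fun w => fh (z w).
pose Tz := fun w => Tdiff (z w).
pose v := fun w => (hs (x w) - h (x w))%R.
have mF : measurable_fun setT F := measurableT_comp mfh mz.
have mTz : measurable_fun setT Tz := measurableT_comp mT mz.
have mhx : measurable_fun setT (fun w => h (x w)) := measurableT_comp mh mx.
have mhsx : measurable_fun setT (fun w => hs (x w)) := measurableT_comp mhs mx.
have mv : measurable_fun setT v := measurable_funB mhsx mhx.
have mD : measurable_fun setT (fun w => F w - Tz w)%R := measurable_funB mF mTz.
have mND : measurable_fun setT (fun w => - (F w - Tz w))%R := measurable_funN mD.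
have nF : Lnorm P 2%:E (EFin \o F) < +oo := fh2.
have nD : Lnorm P 2%:E (EFin \o (fun w => F w - Tz w)%R) <= eps%:E := hclose.
have nDf : Lnorm P 2%:E (EFin \o (fun w => F w - Tz w)%R) < +oo.
  exact: le_lt_trans nD (ltry _).
have eTz : (F \+ (fun w => - (F w - Tz w)))%R = Tz.
  by apply/funext => w /=; rewrite opprB addrC subrK.
have nTzle : Lnorm P 2%:E (EFin \o Tz) <=
    Lnorm P 2%:E (EFin \o F) + Lnorm P 2%:E (EFin \o (fun w => F w - Tz w)%R).
  rewrite -{1}eTz; apply: le_trans (minkowski_EFin P mF mND _) _.
    by rewrite ler1n.
  by rewrite (L2_opp P (fun w => F w - Tz w)%R).
have nTz : Lnorm P 2%:E (EFin \o Tz) < +oo.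
  exact: le_lt_trans nTzle (lte_add_pinfty nF nDf).
have nhx : Lnorm P 2%:E (EFin \o (fun w => h (x w))) < +oo := h2.
have nhsx : Lnorm P 2%:E (EFin \o (fun w => hs (x w))) < +oo := hs2.
have ny : Lnorm P 2%:E (EFin \o y) < +oo := y2.
have nsub (a b : Omega -> R) : measurable_fun setT a -> measurable_fun setT b ->
    Lnorm P 2%:E (EFin \o a) < +oo -> Lnorm P 2%:E (EFin \o b) < +oo ->
    Lnorm P 2%:E (EFin \o (fun w => a w - b w)%R) < +oo.
  move=> ma mb na nb.
  have := L2_add ma (measurable_funN mb) na.
  by rewrite (L2_opp P b) => /(_ nb).
have nv : Lnorm P 2%:E (EFin \o v) < +oo := nsub _ _ mhsx mhx nhsx nhx.
have iA := L2_int_prod (measurable_funB my mhx) mF (nsub _ _ my mhx ny nhx) nF.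
have iB := L2_int_prod (measurable_funB my mhsx) mF (nsub _ _ my mhsx ny nhsx) nF.
have Ediff : Psi P y x z h fh - Psi P y x z hs fh = \int[P]_w (v w * F w)%:E.
  have E := @integralB_EFin _ _ _ P setT _ _ measurableT iA iB.
  rewrite /Psi -E; apply: eq_integral => w _ /=.
  by rewrite -EFinB /v /F; congr EFin; ring.
have iv : P.-integrable setT (EFin \o v) := L2_int mv nv.
have j1 : P.-integrable setT (fun w => (v w * fh (z w))%:E) :=
  L2_int_prod mv mF nv nF.
have j2 : P.-integrable setT (fun w => (Tz w * fh (z w))%:E) :=
  L2_int_prod mTz mF nTz nF.
have Etower : \int[P]_w (v w * F w)%:E = \int[P]_w (Tz w * F w)%:E.
  exact: (tower_gen mz mv mTz iv iT hT mfh j1 j2).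
have Eq' : pnorm2 P z Tdiff' = Lnorm P 2%:E (EFin \o Tz).
  apply: (cond_unique mz mT mT' iv iT iT' hT).
  move=> B mB; rewrite -hT' //; apply: eq_integral => w _.
  by rewrite /v opprB.
have finN (f : Omega -> R) : Lnorm P 2%:E (EFin \o f) < +oo ->
    Lnorm P 2%:E (EFin \o f) = (fine (Lnorm P 2%:E (EFin \o f)))%:E.
  by move=> nf; rewrite fineK // ge0_fin_numE // Lnorm_ge0.
set n := fine (Lnorm P 2%:E (EFin \o F)).
set e := fine (Lnorm P 2%:E (EFin \o (fun w => F w - Tz w)%R)).
set t := fine (Lnorm P 2%:E (EFin \o Tz)).
have Nn : Lnorm P 2%:E (EFin \o F) = n%:E := finN _ nF.
have Ne : Lnorm P 2%:E (EFin \o (fun w => F w - Tz w)%R) = e%:E := finN _ nDf.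
have Nt : Lnorm P 2%:E (EFin \o Tz) = t%:E := finN _ nTz.
have n0 : (0 < n)%R.
  by rewrite -lte_fin -Nn; exact: hpos.
have e0 : (0 <= e)%R by rewrite -lee_fin -Ne Lnorm_ge0.
have eeps : (e <= eps)%R by rewrite -lee_fin -Ne.
have tne : (t <= n + e)%R by rewrite -lee_fin EFinD -Nn -Ne -Nt.
have iFF := L2_int_prod mF mF nF nF.
have iDF := L2_int_prod mD mF nDf nF.
have IFF : \int[P]_w (F w * F w)%:E = (n ^+ 2)%:E.
  have two0 : (2%R : R) != 0%R by rewrite pnatr_eq0.
  have := @poweR_Lnorm _ _ _ P (EFin \o F) 2%R two0.
  rewrite Nn poweR_EFin powR_mulrn ?(ltW n0) // => ->.
  apply: eq_integral => w _ /=.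
  by rewrite powR_mulrn // real_normK ?num_real // expr2.
have ID : `|\int[P]_w ((F w - Tz w) * F w)%:E| <= (e * n)%:E.
  apply: le_trans (le_abse_integral P measurableT _) _.
    exact: (measurable_int _ iDF).
  have := hoelder P mD mF (ltr0Sn _ 1) (ltr0Sn _ 1) (half_conj R).
  rewrite Lnorm1 Ne Nn -EFinM.
  exact.
have EI : \int[P]_w (Tz w * F w)%:E =
    (n ^+ 2)%:E - \int[P]_w ((F w - Tz w) * F w)%:E.
  rewrite -IFF.
  have E := @integralB_EFin _ _ _ P setT _ _ measurableT iFF iDF.
  rewrite -E; apply: eq_integral => w _ /=.
  by rewrite -EFinB; congr EFin; ring.
have finID : \int[P]_w ((F w - Tz w) * F w)%:E \is a fin_num.
  by have := integrable_fin_num measurableT iDF.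
set rd := fine (\int[P]_w ((F w - Tz w) * F w)%:E).
have Ed : \int[P]_w ((F w - Tz w) * F w)%:E = rd%:E by rewrite fineK.
rewrite Ed abse_EFin lee_fin in ID.
have NF' : pnorm2 P z fh = n%:E := Nn.
rewrite Ediff Etower EI Ed NF' Eq' Nt inver gt_eqF //.
change ((t - 2 * eps)%:E <= ((n ^+ 2 - rd) / n)%:E).
rewrite lee_fin.
rewrite ler_pdivlMr //.
move: ID; rewrite ler_norml => /andP[rd1 rd2].
have hh1 : (e * n <= eps * n)%R by rewrite ler_wpM2r // ltW.
have hh2 : (t * n <= (n + e) * n)%R by rewrite ler_wpM2r // ltW.
nra.
Qed.
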